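(* Let $0<q<1$ and let $s_1,\dots,s_n$ be positive integers with $s_j>1$ for some $j$. Then \[ T[s_1,\dots,s_n]-T[s_2,\dots,s_n,s_1] = \zeta[s_1+1,s_2,\dots,s_n] - \sum_{k=0}^{s_1-2}\zeta[s_1-k,s_2,\dots,s_n,k+1], \] where the sum on the right is zero if $s_1=1$.
   Context: Fix $0<q<1$ and $[x]_q := (1-q^x)/(1-q)$. For positive integers $t_1,\dots,t_N$ with $t_1>1$, $\zeta[t_1,\dots,t_N] := \sum_{k_1>\cdots>k_N>0}\prod_{j=1}^N q^{(t_j-1)k_j}/[k_j]_q^{t_j}$. For positive integers $s_1,\dots,s_n$ define \[ T[s_1,\dots,s_n] := \sum_{k_1>\cdots>k_n>k_{n+1}\ge 0}\frac{q^{k_1-k_{n+1}}}{[k_1-k_{n+1}]_q}\prod_{j=1}^n\frac{q^{(s_j-1)k_j}}{[k_j]_q^{s_j}} \] (sum over integers satisfying the indicated inequalities); it is finite when some $s_j>1$. *)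

(* Defs.v *)
From Stdlib Require Import Reals List.
From Coquelicot Require Import Coquelicot.
Open Scope R_scope.

Fixpoint sumlt (f : nat -> R) (n : nat) : R :=
  match n with O => 0 | S m => sumlt f m + f m end.

Definition qint (q : R) (x : nat) : R := (1 - q ^ x) / (1 - q).

Definition qterm (q : R) (t k : nat) : R := q ^ ((t - 1) * k) / (qint q k) ^ t.

(* zsum q [t1;..;tN] b = sum over b > k1 > ... > kN > 0 of prod_j qterm q tj kj *)
Fixpoint zsum (q : R) (ts : list nat) (b : nat) : R :=
  match ts with
  | nil => 1
  | t :: ts' => sumlt (fun k => match k with O => 0 | _ => qterm q t k * zsum q ts' k end) b
  end.

(* wsum q [t1;..;tn] b f = sum over b > k1 > ... > kn > k_{n+1} >= 0
   of prod_j qterm q tj kj * f k_{n+1} *)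
Fixpoint wsum (q : R) (ts : list nat) (b : nat) (f : nat -> R) : R :=
  match ts with
  | nil => sumlt f b
  | t :: ts' => sumlt (fun k => match k with O => 0 | _ => qterm q t k * wsum q ts' k f end) b
  end.

Definition Ttrunc (q : R) (ss : list nat) (M : nat) : R :=
  match ss with
  | nil => 0
  | s :: ss' =>
      sumlt (fun k1 => match k1 with
                       | O => 0
                       | _ => qterm q s k1 *
                              wsum q ss' k1 (fun k => q ^ (k1 - k) / qint q (k1 - k))
                       end) M
  end.

(* All summands are positive, so the (multiple) series equals the limit of the
   nondecreasing truncations over k1 < M. *)
Definition qzeta (q : R) (ts : list nat) : R := real (Lim_seq (zsum q ts)).
Definition qT (q : R) (ss : list nat) : R := real (Lim_seq (Ttrunc q ss)).

(* Main.v *)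
Require Import Defs.
From Stdlib Require Import Reals List Lia Lra Psatz.
From Coquelicot Require Import Coquelicot.
Open Scope R_scope.


Definition pz (k : nat) (x : R) : R := match k with O => 0 | S _ => x end.

Lemma sumlt_ext F G n : (forall k, (k < n)%nat -> F k = G k) -> sumlt F n = sumlt G n.
Proof. induction n; intros H; simpl; auto. rewrite IHn by (intros; apply H; lia). rewrite H by lia; auto. Qed.

Lemma sumlt_plus F G n : sumlt (fun k => F k + G k) n = sumlt F n + sumlt G n.
Proof. induction n; simpl; [lra|rewrite IHn; lra]. Qed.

Lemma sumlt_scal c F n : sumlt (fun k => c * F k) n = c * sumlt F n.
Proof. induction n; simpl; [lra|rewrite IHn; lra]. Qed.

Lemma sumlt_minus F G n : sumlt (fun k => F k - G k) n = sumlt F n - sumlt G n.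
Proof. induction n; simpl; [lra|rewrite IHn; lra]. Qed.

Lemma sumlt_zero n : sumlt (fun _ => 0) n = 0.
Proof. induction n; simpl; [lra|rewrite IHn; lra]. Qed.

Lemma sumlt_zero_ext F n : (forall k, (k < n)%nat -> F k = 0) -> sumlt F n = 0.
Proof. intros H. transitivity (sumlt (fun _ => 0) n); [apply sumlt_ext; auto | apply sumlt_zero]. Qed.

Lemma sumlt_const c n : sumlt (fun _ => c) n = INR n * c.
Proof. induction n; simpl sumlt; [simpl; lra|rewrite IHn, S_INR; lra]. Qed.

Lemma sumlt_nonneg F n : (forall k, (k < n)%nat -> 0 <= F k) -> 0 <= sumlt F n.
Proof. induction n; intros H; simpl; [lra|]. assert (0 <= F n) by (apply H; lia).
 assert (0 <= sumlt F n) by (apply IHn; intros; apply H; lia). lra. Qed.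

Lemma sumlt_le F G n : (forall k, (k < n)%nat -> F k <= G k) -> sumlt F n <= sumlt G n.
Proof. induction n; intros H; simpl; [lra|]. assert (F n <= G n) by (apply H; lia).
 assert (sumlt F n <= sumlt G n) by (apply IHn; intros; apply H; lia). lra. Qed.

Lemma sumlt_swap (F : nat -> nat -> R) n N :
  sumlt (fun k => sumlt (fun j => F k j) N) n = sumlt (fun j => sumlt (fun k => F k j) n) N.
Proof. induction n; simpl.
 - rewrite sumlt_zero; auto.
 - rewrite IHn, <- sumlt_plus; auto. Qed.

Lemma sumlt_tri (F : nat -> nat -> R) n :
  sumlt (fun k => sumlt (fun m => F k m) k) n =
  sumlt (fun m => sumlt (fun k => if (m <? k)%nat then F k m else 0) n) n.
Proof. induction n. { simpl. auto. }
 change (sumlt (fun k => sumlt (fun m => F k m) k) n + sumlt (fun m => F n m) n =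
   sumlt (fun m => sumlt (fun k => if (m <? k)%nat then F k m else 0) (S n)) (S n)).
 rewrite IHn.
 rewrite (sumlt_ext (fun m => sumlt (fun k => if (m <? k)%nat then F k m else 0) (S n))
   (fun m => sumlt (fun k => if (m <? k)%nat then F k m else 0) n + (if (m <? n)%nat then F n m else 0))).
 2:{ intros; reflexivity. }
 change (sumlt (fun m : nat => sumlt (fun k : nat => if (m <? k)%nat then F k m else 0) n) n +
   sumlt (fun m : nat => F n m) n =
   sumlt (fun m : nat => sumlt (fun k : nat => if (m <? k)%nat then F k m else 0) n +
     (if (m <? n)%nat then F n m else 0)) n +
   (sumlt (fun k : nat => if (n <? k)%nat then F k n else 0) n + (if (n <? n)%nat then F n n else 0))).
 rewrite sumlt_plus.
 assert (E1: sumlt (fun m => if (m <? n)%nat then F n m else 0) n = sumlt (fun m => F n m) n).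
 { apply sumlt_ext. intros m Hm.
   replace (m <? n)%nat with true by (symmetry; apply Nat.ltb_lt; auto). auto. }
 assert (E2: sumlt (fun k : nat => if (n <? k)%nat then F k n else 0) n = 0).
 { apply sumlt_zero_ext. intros k Hk.
   replace (n <? k)%nat with false by (symmetry; apply Nat.ltb_ge; lia). auto. }
 replace (n <? n)%nat with false by (symmetry; apply Nat.ltb_ge; lia).
 rewrite E1, E2. lra.
Qed.

Section W.
Variable q : R.

Lemma wsum_ext ts : forall b g g', (forall m, (m < b)%nat -> g m = g' m) ->
  wsum q ts b g = wsum q ts b g'.
Proof. induction ts as [|t ts IH]; intros b g g' H; simpl.
 - apply sumlt_ext; auto.
 - apply sumlt_ext. intros [|k] Hk; auto. f_equal. apply IH. intros; apply H; lia. Qed.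

Lemma wsum_plus ts : forall b g g',
  wsum q ts b (fun m => g m + g' m) = wsum q ts b g + wsum q ts b g'.
Proof. induction ts as [|t ts IH]; intros b g g'; simpl.
 - apply sumlt_plus.
 - rewrite <- sumlt_plus. apply sumlt_ext. intros [|k] Hk; [lra|]. rewrite IH. lra. Qed.

Lemma wsum_scal ts : forall b c g,
  wsum q ts b (fun m => c * g m) = c * wsum q ts b g.
Proof. induction ts as [|t ts IH]; intros b c g; simpl.
 - apply sumlt_scal.
 - rewrite <- sumlt_scal. apply sumlt_ext. intros [|k] Hk; [lra|]. rewrite IH. lra. Qed.

Lemma wsum_zero ts : forall b, wsum q ts b (fun _ => 0) = 0.
Proof. induction ts as [|t ts IH]; intros b; simpl.
 - apply sumlt_zero.
 - apply sumlt_zero_ext. intros [|k] Hk; [lra|]. rewrite IH. lra. Qed.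

Lemma wsum_minus ts b g g' :
  wsum q ts b (fun m => g m - g' m) = wsum q ts b g - wsum q ts b g'.
Proof. unfold Rminus. rewrite wsum_plus.
 rewrite (wsum_ext ts b (fun m => - g' m) (fun m => (-1) * g' m)) by (intros; lra).
 rewrite wsum_scal. lra. Qed.

Lemma wsum_sumlt ts b (G : nat -> nat -> R) N :
  wsum q ts b (fun m => sumlt (fun j => G j m) N) = sumlt (fun j => wsum q ts b (G j)) N.
Proof. induction N; simpl.
 - apply wsum_zero.
 - rewrite wsum_plus, IHN. auto. Qed.

Lemma wsum_app1 ss t : forall b g,
  wsum q (ss ++ t :: nil) b g = wsum q ss b (fun k => pz k (qterm q t k * sumlt g k)).
Proof. induction ss as [|s ss IH]; intros b g; simpl; auto.
 apply sumlt_ext. intros [|k] Hk; auto. rewrite IH. auto. Qed.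

Lemma zsum_app1 ss t : forall b,
  zsum q (ss ++ t :: nil) b = wsum q ss b (fun k => pz k (qterm q t k)).
Proof. induction ss as [|s ss IH]; intros b; simpl.
 - apply sumlt_ext. intros [|k] Hk; simpl; lra.
 - apply sumlt_ext. intros [|k] Hk; auto. rewrite IH. auto. Qed.

Lemma wsum_delta ts : forall b, (0 < b)%nat ->
  wsum q ts b (fun m => match m with O => 1 | S _ => 0 end) = zsum q ts b.
Proof. induction ts as [|t ts IH]; intros b Hb; simpl.
 - destruct b as [|b]; [lia|]. induction b; simpl; [lra|]. simpl in IHb. rewrite IHb by lia. lra.
 - apply sumlt_ext. intros [|k] Hk; auto. rewrite IH by lia. auto. Qed.

End W.


Definition ff q d := q ^ d / qint q d.

Section Q.
Variable q : R.
Hypothesis hq : 0 < q < 1.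

Lemma pow_le1 n : q ^ n <= 1.
Proof. rewrite <- (pow1 n). apply pow_incr. lra. Qed.

Lemma pow_pos' n : 0 < q ^ n.
Proof. apply pow_lt; lra. Qed.

Lemma pow_le_dec a b : (b <= a)%nat -> q ^ a <= q ^ b.
Proof. intros H. replace a with (b + (a - b))%nat by lia. rewrite pow_add.
 pose proof (pow_le1 (a - b)). pose proof (pow_pos' b). nra. Qed.

Lemma qint_ge1 k : (1 <= k)%nat -> 1 <= qint q k.
Proof. intros H. unfold qint. assert (q ^ k <= q).
 { replace q with (q ^ 1) at 2 by (simpl; lra). apply pow_le_dec; auto. }
 apply (Rmult_le_reg_r (1 - q)); [lra|]. unfold Rdiv. rewrite Rmult_assoc, Rinv_l by lra. lra. Qed.

Lemma qint_pos k : (1 <= k)%nat -> 0 < qint q k.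
Proof. intros H; pose proof (qint_ge1 k H); lra. Qed.

Lemma qint0 : qint q 0 = 0.
Proof. unfold qint. simpl. unfold Rdiv. ring. Qed.

Lemma qterm_nonneg t k : 0 <= qterm q t k.
Proof. unfold qterm. destruct k as [|k].
 - rewrite qint0. unfold Rdiv. destruct t; simpl. lra. rewrite Rmult_0_l, Rinv_0. lra.
 - pose proof (qint_pos (S k)). apply Rmult_le_pos. left; apply pow_pos'.
   left. apply Rinv_0_lt_compat. apply pow_lt. apply H. lia. Qed.

Lemma qterm_le_pow t k : (1 <= k)%nat -> qterm q t k <= q ^ ((t - 1) * k).
Proof. intros H. unfold qterm. pose proof (qint_ge1 k H).
 pose proof (pow_R1_Rle _ t H0). pose proof (pow_pos' ((t - 1) * k)).
 unfold Rdiv. assert (/ qint q k ^ t <= 1).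
 { rewrite <- Rinv_1. apply Rinv_le_contravar; lra. }
 assert (0 < / qint q k ^ t) by (apply Rinv_0_lt_compat; lra). nra. Qed.

Lemma qterm_le1 t k : (1 <= k)%nat -> qterm q t k <= 1.
Proof. intros H. pose proof (qterm_le_pow t k H). pose proof (pow_le1 ((t-1)*k)). lra. Qed.

Lemma qterm_le_geom t k : (2 <= t)%nat -> (1 <= k)%nat -> qterm q t k <= q ^ k.
Proof. intros Ht H. pose proof (qterm_le_pow t k H).
 pose proof (pow_le_dec ((t-1)*k) k ltac:(nia)). lra. Qed.

Lemma ff_nonneg d : 0 <= ff q d.
Proof. unfold ff. destruct d as [|d].
 - rewrite qint0. unfold Rdiv. rewrite Rinv_0. lra.
 - pose proof (qint_pos (S d) ltac:(lia)). pose proof (pow_pos' (S d)).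
   apply Rmult_le_pos; [lra|]. left; apply Rinv_0_lt_compat; lra. Qed.

Lemma ff_le_pow d : ff q d <= q ^ d.
Proof. unfold ff. destruct d as [|d].
 - rewrite qint0. unfold Rdiv. rewrite Rinv_0. simpl. lra.
 - pose proof (qint_ge1 (S d) ltac:(lia)). pose proof (pow_pos' (S d)).
   unfold Rdiv. assert (/ qint q (S d) <= 1).
   { rewrite <- Rinv_1. apply Rinv_le_contravar; lra. }
   assert (0 < / qint q (S d)) by (apply Rinv_0_lt_compat; lra). nra. Qed.

Lemma ff_le1 d : ff q d <= 1.
Proof. pose proof (ff_le_pow d). pose proof (pow_le1 d). lra. Qed.

Lemma qterm_succ t k : (1 <= t)%nat -> (1 <= k)%nat ->
  qterm q (S t) k = qterm q t k * ff q k.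
Proof. intros Ht Hk. unfold qterm, ff.
 replace ((S t - 1) * k)%nat with ((t - 1) * k + k)%nat by nia.
 rewrite pow_add. pose proof (qint_pos k Hk). simpl. field. split; [lra|apply pow_nonzero; lra]. Qed.

Lemma qterm_1 k : qterm q 1 k = / qint q k.
Proof. unfold qterm. simpl. unfold Rdiv. rewrite Rmult_1_l, Rmult_1_r. auto. Qed.

Lemma qterm_2 k : (1 <= k)%nat -> qterm q 2 k = ff q k / qint q k.
Proof. intros Hk. unfold qterm, ff. replace ((2-1)*k)%nat with k by lia.
 pose proof (qint_pos k Hk). simpl. field. lra. Qed.

Lemma alg_base x y u : 0 < x < 1 -> 0 < y < 1 -> 0 < u ->
  / ((1 - x*y)/u) * (y / ((1-y)/u)) =
  / ((1 - x)/u) * (y / ((1-y)/u) - x*y / ((1 - x*y)/u)).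
Proof. intros. assert (1 - x*y > 0) by nra. field. repeat split; lra. Qed.

Lemma alg_step x y u : 0 < x < 1 -> 0 < y < 1 -> 0 < u ->
  (x*y / ((1 - x*y)/u)) * (y / ((1-y)/u) - x*y / ((1 - x*y)/u))
   + (x*y / ((1 - x*y)/u)) / ((1 - x*y)/u) =
  (x / ((1-x)/u)) * (y / ((1-y)/u) - x*y / ((1 - x*y)/u)).
Proof. intros. assert (1 - x*y > 0) by nra. field. repeat split; lra. Qed.

Lemma split_km k m : (0 < m < k)%nat ->
  q ^ k = q ^ m * q ^ (k - m) /\ 0 < q ^ m < 1 /\ 0 < q ^ (k - m) < 1.
Proof. intros H. split. rewrite <- pow_add. f_equal. lia.
 split; split; try apply pow_pos'; apply pow_lt_1_compat; lra || lia. Qed.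

Lemma key_base k m : (0 < m < k)%nat ->
  qterm q 1 k * ff q (k - m) = qterm q 1 m * (ff q (k - m) - ff q k).
Proof. intros H. rewrite !qterm_1. unfold ff, qint.
 destruct (split_km k m H) as [E [Hx Hy]]. rewrite E.
 apply alg_base; lra. Qed.

Lemma key_step k m : (0 < m < k)%nat ->
  ff q k * (ff q (k - m) - ff q k) + qterm q 2 k = ff q m * (ff q (k - m) - ff q k).
Proof. intros H. rewrite qterm_2 by lia. unfold ff, qint.
 destruct (split_km k m H) as [E [Hx Hy]]. rewrite E.
 apply alg_step; lra. Qed.

Lemma key k m p : (0 < m < k)%nat ->
  qterm q (S p) k * ff q (k - m) +
  sumlt (fun j => qterm q (S p - j) k * qterm q (S j) m) p =
  qterm q (S p) m * (ff q (k - m) - ff q k).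
Proof. intros H. induction p.
 - simpl sumlt. rewrite Rplus_0_r. apply key_base; auto.
 - change (sumlt (fun j => qterm q (S (S p) - j) k * qterm q (S j) m) (S p)) with
     (sumlt (fun j => qterm q (S (S p) - j) k * qterm q (S j) m) p +
      qterm q (S (S p) - p) k * qterm q (S p) m).
   replace (S (S p) - p)%nat with 2%nat by lia.
   rewrite (sumlt_ext _ (fun j => ff q k * (qterm q (S p - j) k * qterm q (S j) m))).
   2:{ intros j Hj. replace (S (S p) - j)%nat with (S (S p - j)) by lia.
       rewrite qterm_succ by lia. ring. }
   rewrite sumlt_scal. rewrite (qterm_succ (S p) k) by lia.
   rewrite (qterm_succ (S p) m) by lia.
   assert (E := key_step k m H).
   replace (qterm q (S p) k * ff q k * ff q (k - m) + (ff q k * sumlt (fun j : nat => qterm q (S p - j) k * qterm q (S j) m) p + qterm q 2 k * qterm q (S p) m))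
     with (ff q k * (qterm q (S p) k * ff q (k - m) + sumlt (fun j : nat => qterm q (S p - j) k * qterm q (S j) m) p) + qterm q 2 k * qterm q (S p) m) by ring.
   rewrite IHp. transitivity (qterm q (S p) m * (ff q k * (ff q (k - m) - ff q k) + qterm q 2 k)); [ring|]. rewrite E. ring.
Qed.

Definition Fm M m := sumlt (fun m' => ff q (M - 1 - m')) m.

Lemma Fm_diff N m : Fm (S N) m - Fm N m = ff q N - ff q (N - m).
Proof. induction m.
 - unfold Fm; simpl. rewrite Nat.sub_0_r. lra.
 - unfold Fm in *. change (sumlt (fun m' => ff q (S N - 1 - m')) (S m)) with
    (sumlt (fun m' => ff q (S N - 1 - m')) m + ff q (S N - 1 - m)).
   change (sumlt (fun m' => ff q (N - 1 - m')) (S m)) with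
    (sumlt (fun m' => ff q (N - 1 - m')) m + ff q (N - 1 - m)).
   replace (S N - 1 - m)%nat with (N - m)%nat by lia.
   replace (N - 1 - m)%nat with (N - S m)%nat by lia. lra.
Qed.

Lemma tele K m d :
  sumlt (fun k => if (K <? k)%nat then ff q (k - m) - ff q k else 0) (S K + d) =
  Fm (S K) m - Fm (S K + d) m.
Proof. induction d.
 - rewrite Nat.add_0_r. rewrite sumlt_zero_ext. lra.
   intros k Hk. replace (K <? k)%nat with false by (symmetry; apply Nat.ltb_ge; lia). auto.
 - replace (S K + S d)%nat with (S (S K + d)) by lia.
   change (sumlt (fun k => if (K <? k)%nat then ff q (k - m) - ff q k else 0) (S (S K + d)))
    with (sumlt (fun k => if (K <? k)%nat then ff q (k - m) - ff q k else 0) (S K + d) +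
          (if (K <? S K + d)%nat then ff q (S K + d - m) - ff q (S K + d) else 0)).
   rewrite IHd. replace (K <? S K + d)%nat with true by (symmetry; apply Nat.ltb_lt; lia).
   pose proof (Fm_diff (S K + d) m). lra.
Qed.

Lemma tele' K m M : (K < M)%nat ->
  sumlt (fun k => if (K <? k)%nat then ff q (k - m) - ff q k else 0) M =
  Fm (S K) m - Fm M m.
Proof. intros H. replace M with (S K + (M - S K))%nat by lia. apply tele. Qed.

End Q.


Section D.
Variable q : R.
Hypothesis hq : 0 < q < 1.

Definition d0 (m : nat) : R := match m with O => 1 | S _ => 0 end.

Definition Rsum p ss M := sumlt (fun k1 => pz k1 (wsum q ss k1
   (fun m => pz m (qterm q (S p) m * (ff q (k1 - m) - ff q k1))))) M.

Lemma step1 p ss M :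
 Ttrunc q (S p :: ss) M = zsum q (S (S p) :: ss) M + Rsum p ss M
   - sumlt (fun j => zsum q ((S p - j)%nat :: ss ++ S j :: nil) M) p.
Proof.
 unfold Ttrunc, Rsum.
 change (zsum q (S (S p) :: ss) M) with
   (sumlt (fun k => pz k (qterm q (S (S p)) k * zsum q ss k)) M).
 rewrite (sumlt_ext (fun j => zsum q ((S p - j)%nat :: ss ++ S j :: nil) M)
   (fun j => sumlt (fun k => pz k (qterm q (S p - j) k * zsum q (ss ++ S j :: nil) k)) M))
   by (intros; reflexivity).
 rewrite <- sumlt_swap, <- sumlt_plus, <- sumlt_minus.
 apply sumlt_ext. intros [|k] Hk.
 - simpl. rewrite sumlt_zero. lra.
 - set (K := S k).
   change (qterm q (S p) K * wsum q ss K (fun m => ff q (K - m)) =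
     qterm q (S (S p)) K * zsum q ss K +
     wsum q ss K (fun m => pz m (qterm q (S p) m * (ff q (K - m) - ff q K))) -
     sumlt (fun j => pz K (qterm q (S p - j) K * zsum q (ss ++ S j :: nil) K)) p).
   rewrite <- wsum_scal.
   rewrite (wsum_ext q ss K _ (fun m => (qterm q (S (S p)) K * d0 m +
       pz m (qterm q (S p) m * (ff q (K - m) - ff q K))) -
       sumlt (fun j => qterm q (S p - j) K * pz m (qterm q (S j) m)) p)).
   2:{ intros [|m] Hm.
       - rewrite sumlt_zero_ext by (intros; simpl; ring). simpl d0. simpl pz. rewrite Nat.sub_0_r. rewrite (qterm_succ q hq (S p) K) by (unfold K; lia). lra.
       - cbn [pz d0]. pose proof (key q hq K (S m) p ltac:(unfold K in *; lia)). lra. }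
   rewrite wsum_minus, wsum_plus, wsum_scal.
   rewrite wsum_delta by (unfold K; lia).
   rewrite (wsum_sumlt q ss K (fun j m => qterm q (S p - j) K * pz m (qterm q (S j) m))).
   f_equal. apply sumlt_ext. intros j Hj. rewrite wsum_scal, zsum_app1. reflexivity.
Qed.

Definition Esum p ss M := wsum q ss M (fun m => pz m (qterm q (S p) m * Fm q M m)).

Lemma step2 p ss M :
  Rsum p ss M = Ttrunc q (ss ++ S p :: nil) M - Esum p ss M.
Proof.
 unfold Rsum, Esum. destruct ss as [|s2 ss'].
 - simpl app. unfold Ttrunc. simpl wsum.
   rewrite (sumlt_ext _ (fun k1 => sumlt (fun m => pz m (qterm q (S p) m * (ff q (k1 - m) - ff q k1))) k1))
     by (intros [|k] _; reflexivity).
   rewrite sumlt_tri. rewrite <- sumlt_minus. apply sumlt_ext. intros m Hm.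
   rewrite (sumlt_ext _ (fun k => pz m (qterm q (S p) m * (if (m <? k)%nat then ff q (k - m) - ff q k else 0)))).
   2:{ intros k Hk. destruct (m <? k)%nat; destruct m; simpl; lra. }
   destruct m as [|m]; [simpl; rewrite sumlt_zero; lra|].
   simpl pz. rewrite sumlt_scal. rewrite tele' by (auto; lia).
   rewrite Rmult_minus_distr_l. f_equal. f_equal.
   all: try (unfold Fm; apply sumlt_ext; intros j Hj; unfold ff; f_equal; f_equal; lia).
 - simpl app. unfold Ttrunc. cbn [wsum].
   rewrite (sumlt_ext _ (fun k1 => sumlt (fun k => pz k (qterm q s2 k * wsum q ss' k
       (fun m => pz m (qterm q (S p) m * (ff q (k1 - m) - ff q k1))))) k1))
     by (intros [|k] _; reflexivity).
   rewrite sumlt_tri. rewrite <- sumlt_minus. apply sumlt_ext. intros k2 Hk2.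
   destruct k2 as [|k2].
   { rewrite sumlt_zero_ext. simpl; lra. intros; destruct (0 <? k)%nat; auto. }
   set (K := S k2).
   rewrite (sumlt_ext _ (fun k1 => qterm q s2 K * wsum q ss' K
       (fun m => (if (K <? k1)%nat then pz m (qterm q (S p) m * (ff q (k1 - m) - ff q k1)) else 0)))).
   2:{ intros k1 _. destruct (K <? k1)%nat; [reflexivity|]. rewrite wsum_zero. lra. }
   rewrite sumlt_scal. rewrite <- Rmult_minus_distr_l. f_equal.
   rewrite <- (wsum_sumlt q ss' K (fun j m => if (K <? j)%nat then pz m (qterm q (S p) m * (ff q (j - m) - ff q j)) else 0)).
   rewrite wsum_app1. rewrite <- wsum_minus.
   apply wsum_ext. intros m Hm.
   rewrite (sumlt_ext _ (fun k => pz m (qterm q (S p) m * (if (K <? k)%nat then ff q (k - m) - ff q k else 0)))).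
   2:{ intros k Hk. destruct (K <? k)%nat; destruct m; simpl; lra. }
   destruct m as [|m]; [simpl; rewrite sumlt_zero; lra|].
   cbn [pz]. rewrite (sumlt_scal _ (fun k => if (K <? k)%nat then ff q (k - S m) - ff q k else 0)). rewrite tele' by (auto; unfold K in *; lia).
   rewrite Rmult_minus_distr_l. f_equal. all: try f_equal.
   all: try (unfold Fm; apply sumlt_ext; intros j Hj; unfold ff; f_equal; f_equal; unfold K in *; lia).
Qed.

End D.


Lemma sumlt_sum_n a n : sumlt a (S n) = sum_n a n.
Proof. induction n.
 - simpl. rewrite sum_O. lra.
 - rewrite sum_Sn. change (sumlt a (S (S n))) with (sumlt a (S n) + a (S n)). rewrite IHn. reflexivity. Qed.

Lemma sumlt_le_series b M : (forall k, 0 <= b k) -> ex_series b -> sumlt b M <= Series b.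
Proof. intros Hb Hex.
 assert (Hl : is_lim_seq (sum_n b) (Series b)).
 { pose proof (Series_correct b Hex) as H. exact H. }
 assert (Hinc : forall n, sum_n b n <= sum_n b (S n)).
 { intros n. rewrite sum_Sn. pose proof (Hb (S n)). change (plus (sum_n b n) (b (S n))) with (sum_n b n + b (S n)). lra. }
 destruct M as [|M].
 - simpl. pose proof (is_lim_seq_incr_compare _ _ Hl Hinc 0). rewrite sum_O in H. pose proof (Hb 0%nat). lra.
 - rewrite sumlt_sum_n. apply (is_lim_seq_incr_compare _ _ Hl Hinc).
Qed.

Lemma lim_pow_seq (x : nat -> R) (l : R) L : is_lim_seq x l -> is_lim_seq (fun n => x n ^ L) (l ^ L).
Proof. intros H. induction L.
 - simpl. apply is_lim_seq_const.
 - simpl. exact (is_lim_seq_mult' _ _ _ _ H IHL). Qed.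

Section S.
Variable q : R.
Hypothesis hq : 0 < q < 1.

Definition aa L n := INR (S n) ^ L * q ^ n.

Lemma aa_pos L n : 0 < aa L n.
Proof. unfold aa. apply Rmult_lt_0_compat; apply pow_lt; [apply lt_0_INR; lia | lra]. Qed.

Lemma aa_series L : ex_series (fun n => Rabs (aa L n)).
Proof.
 apply (ex_series_DAlembert _ q). lra.
 intros n; pose proof (aa_pos L n); lra.
 assert (Hinv : is_lim_seq (fun n => / INR (S n)) 0).
 { assert (H := is_lim_seq_INR). apply is_lim_seq_incr_1 in H.
   apply is_lim_seq_inv in H; [|discriminate]. exact H. }
 assert (H1 : is_lim_seq (fun n => 1 + / INR (S n)) 1).
 { pose proof (is_lim_seq_plus' (fun _ => 1) _ 1 0 (is_lim_seq_const 1) Hinv) as H. rewrite Rplus_0_r in H. exact H. }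
 apply (lim_pow_seq _ _ L) in H1. rewrite pow1 in H1.
 apply (is_lim_seq_mult' _ (fun _ => q) _ q) in H1; [|apply is_lim_seq_const].
 rewrite Rmult_1_l in H1. revert H1. apply is_lim_seq_ext. intros n.
 pose proof (aa_pos L (S n)). pose proof (aa_pos L n).
 rewrite Rabs_pos_eq by (apply Rlt_le; apply Rdiv_lt_0_compat; auto).
 unfold aa. assert (0 < INR (S n)) by (apply lt_0_INR; lia).
 replace (1 + / INR (S n)) with (INR (S (S n)) / INR (S n)).
 2:{ rewrite (S_INR (S n)). field. lra. }
 unfold Rdiv. rewrite Rpow_mult_distr, pow_inv. change (q ^ S n) with (q * q ^ n).
 field. split; apply pow_nonzero; lra.
Qed.

Lemma S_bound L : exists C, forall M, sumlt (fun k => INR k ^ L * q ^ k) M <= C.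
Proof. exists (Series (fun n => Rabs (aa L n))). intros M.
 eapply Rle_trans; [|apply sumlt_le_series; [intros; apply Rabs_pos|apply aa_series]].
 apply sumlt_le. intros k _. rewrite Rabs_pos_eq by (left; apply aa_pos). unfold aa.
 apply Rmult_le_compat_r. left; apply pow_lt; lra. apply pow_incr. split. apply pos_INR.
 apply le_INR; lia. Qed.

Lemma pow_lim L : is_lim_seq (fun M => INR M ^ L * q ^ M) 0.
Proof. apply (is_lim_seq_le_le (fun _ => 0) _ (fun n => Rabs (aa L n))).
 - intros n. split. apply Rmult_le_pos. apply pow_le, pos_INR. left; apply pow_lt; lra.
   rewrite Rabs_pos_eq by (left; apply aa_pos). unfold aa.
   apply Rmult_le_compat_r. left; apply pow_lt; lra. apply pow_incr. split. apply pos_INR.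
   apply le_INR; lia.
 - apply is_lim_seq_const.
 - apply ex_series_lim_0. apply aa_series. Qed.

End S.


Section B.
Variable q : R.
Hypothesis hq : 0 < q < 1.

Lemma wsum_nonneg ts : forall b g, (forall m, 0 <= g m) -> 0 <= wsum q ts b g.
Proof. induction ts as [|t ts IH]; intros b g H; simpl.
 - apply sumlt_nonneg; auto.
 - apply sumlt_nonneg. intros [|k] _; [lra|]. apply Rmult_le_pos. apply qterm_nonneg; auto. apply IH; auto. Qed.

Lemma zsum_nonneg ts : forall b, 0 <= zsum q ts b.
Proof. induction ts as [|t ts IH]; intros b; simpl. lra.
 apply sumlt_nonneg. intros [|k] _; [lra|]. apply Rmult_le_pos. apply qterm_nonneg; auto. apply IH; auto. Qed.

Lemma INR_pow_mono k b n : (k <= b)%nat -> INR k ^ n <= INR b ^ n.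
Proof. intros H. apply pow_incr. split. apply pos_INR. apply le_INR; auto. Qed.

Lemma wsum_bound_const ts : forall b g C, (forall m, 0 <= g m) ->
  (forall m, (m < b)%nat -> g m <= C) -> wsum q ts b g <= C * INR b ^ S (length ts).
Proof. induction ts as [|t ts IH]; intros b g C Hg HC; simpl.
 - eapply Rle_trans. apply (sumlt_le _ (fun _ => C)); auto. rewrite sumlt_const. right. cbn [pow]. ring.
 - destruct b as [|b]. { simpl. lra. }
   assert (HC0 : 0 <= C) by (pose proof (Hg 0%nat); pose proof (HC 0%nat ltac:(lia)); lra).
   eapply Rle_trans. apply (sumlt_le _ (fun _ => C * INR (S b) ^ S (length ts))).
   + intros [|k] Hk. { apply Rmult_le_pos; auto. apply pow_le, pos_INR. }
     pose proof (qterm_le1 q hq t (S k) ltac:(lia)). pose proof (qterm_nonneg q hq t (S k)).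
     pose proof (wsum_nonneg ts (S k) g Hg).
     assert (wsum q ts (S k) g <= C * INR (S k) ^ S (length ts)) by (apply IH; auto; intros; apply HC; lia).
     assert (C * INR (S k) ^ S (length ts) <= C * INR (S b) ^ S (length ts)).
     { apply Rmult_le_compat_l; auto. apply INR_pow_mono. lia. }
     cbv beta iota. nra.
   + rewrite sumlt_const. right. cbn [pow]. ring.
Qed.

Lemma invq_ge1 : 1 <= / q.
Proof. rewrite <- Rinv_1. apply Rinv_le_contravar; lra. Qed.

Lemma pow_qinv k : q ^ k * (/ q) ^ k = 1.
Proof. rewrite <- Rpow_mult_distr, Rinv_r by lra. apply pow1. Qed.

Lemma wsum_bound_big ts : (exists t, In t ts /\ (2 <= t)%nat) -> forall b g C, (forall m, 0 <= g m) ->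
  (forall m, (m < b)%nat -> g m <= C * (/ q) ^ m) -> wsum q ts b g <= C * INR b ^ S (length ts).
Proof. induction ts as [|t ts IH]; intros Hbig b g C Hg HC.
 - destruct Hbig as [? [[] _]].
 - simpl. destruct b as [|b]. { simpl. lra. }
   assert (HC0 : 0 <= C).
   { pose proof (Hg 0%nat); pose proof (HC 0%nat ltac:(lia)). simpl in *. lra. }
   eapply Rle_trans. apply (sumlt_le _ (fun _ => C * INR (S b) ^ S (length ts))).
   + intros [|k] Hk. { apply Rmult_le_pos; auto. apply pow_le, pos_INR. }
     pose proof (qterm_nonneg q hq t (S k)).
     pose proof (wsum_nonneg ts (S k) g Hg).
     assert (C * INR (S k) ^ S (length ts) <= C * INR (S b) ^ S (length ts)).
     { apply Rmult_le_compat_l; auto. apply INR_pow_mono. lia. }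
     cbv beta iota.
     destruct (Compare_dec.le_lt_dec 2 t) as [Ht|Ht].
     * pose proof (qterm_le_geom q hq t (S k) Ht ltac:(lia)).
       assert (wsum q ts (S k) g <= (C * (/q) ^ S k) * INR (S k) ^ S (length ts)).
       { apply wsum_bound_const; auto. intros m Hm. eapply Rle_trans. apply HC; lia.
         apply Rmult_le_compat_l; auto. apply Rle_pow. apply invq_ge1. lia. }
       pose proof (pow_qinv (S k)). pose proof (pow_le (/q) (S k) ltac:(pose proof invq_ge1; lra)).
       pose proof (pow_le (INR (S k)) (S (length ts)) (pos_INR _)).
       assert (HH : qterm q t (S k) * wsum q ts (S k) g <= q ^ S k * ((C * (/ q) ^ S k) * INR (S k) ^ S (length ts))).
       { apply Rmult_le_compat; auto. }
       replace (q ^ S k * (C * (/ q) ^ S k * INR (S k) ^ S (length ts))) with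
         (C * INR (S k) ^ S (length ts) * (q ^ S k * (/ q) ^ S k)) in HH by ring.
       rewrite pow_qinv in HH. lra.
     * assert (Hb2 : exists t, In t ts /\ (2 <= t)%nat).
       { destruct Hbig as [t' [[E|I] Ht']]; [subst; lia|eauto]. }
       assert (wsum q ts (S k) g <= C * INR (S k) ^ S (length ts)) by (apply IH; auto; intros; apply HC; lia).
       pose proof (qterm_le1 q hq t (S k) ltac:(lia)). nra.
   + rewrite sumlt_const. right. cbn [pow]. ring.
Qed.

Lemma zsum_le_pow ts : forall b, zsum q ts b <= INR b ^ length ts.
Proof. induction ts as [|t ts IH]; intros b; simpl. lra.
 eapply Rle_trans. apply (sumlt_le _ (fun _ => INR b ^ length ts)).
 - intros [|k] Hk. apply pow_le, pos_INR.
   pose proof (qterm_le1 q hq t (S k) ltac:(lia)). pose proof (qterm_nonneg q hq t (S k)).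
   pose proof (zsum_nonneg ts (S k)). pose proof (IH (S k)).
   pose proof (INR_pow_mono (S k) b (length ts) ltac:(lia)). cbv beta iota. nra.
 - rewrite sumlt_const. lra.
Qed.

Lemma pow_sub_inv M m : (m <= M)%nat -> q ^ (M - m) = q ^ M * (/ q) ^ m.
Proof. intros H. replace M with ((M - m) + m)%nat at 2 by lia. rewrite pow_add.
 rewrite Rmult_assoc, pow_qinv. ring. Qed.

Lemma Ttrunc_bound Lst M : (exists t, In t Lst /\ (2 <= t)%nat) ->
  Ttrunc q Lst M <= sumlt (fun k => INR k ^ length Lst * q ^ k) M.
Proof. intros Hbig. destruct Lst as [|t rest]. { destruct Hbig as [? [[] _]]. }
 unfold Ttrunc. apply sumlt_le. intros [|k] Hk.
 { simpl. lra. }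
 cbv beta iota. simpl length.
 pose proof (qterm_nonneg q hq t (S k)).
 assert (Hg : forall m, 0 <= ff q (S k - m)) by (intros; apply ff_nonneg; auto).
 change (fun k0 => q ^ (S k - k0) / qint q (S k - k0)) with (fun k0 => ff q (S k - k0)).
 pose proof (wsum_nonneg rest (S k) _ Hg).
 pose proof (pow_lt q (S k) ltac:(lra)).
 destruct (Compare_dec.le_lt_dec 2 t) as [Ht|Ht].
 - pose proof (qterm_le_geom q hq t (S k) Ht ltac:(lia)).
   assert (wsum q rest (S k) (fun k0 => ff q (S k - k0)) <= 1 * INR (S k) ^ S (length rest)).
   { apply wsum_bound_const; auto. intros; apply ff_le1; auto. }
   nra.
 - assert (Hb2 : exists t, In t rest /\ (2 <= t)%nat).
   { destruct Hbig as [t' [[E|I] Ht']]; [subst; lia|eauto]. }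
   assert (wsum q rest (S k) (fun k0 => ff q (S k - k0)) <= q ^ S k * INR (S k) ^ S (length rest)).
   { apply wsum_bound_big; auto. intros m Hm. rewrite <- pow_sub_inv by lia. apply ff_le_pow; auto. }
   pose proof (qterm_le1 q hq t (S k) ltac:(lia)).
   pose proof (pow_le (INR (S k)) (S (length rest)) (pos_INR _)). nra.
Qed.

Lemma zsum_bound t ts M : (2 <= t)%nat ->
  zsum q (t :: ts) M <= sumlt (fun k => INR k ^ length ts * q ^ k) M.
Proof. intros Ht. simpl. apply sumlt_le. intros [|k] Hk.
 { simpl. destruct (length ts); simpl; lra. }
 pose proof (qterm_le_geom q hq t (S k) Ht ltac:(lia)).
 pose proof (qterm_nonneg q hq t (S k)). pose proof (zsum_nonneg ts (S k)).
 pose proof (zsum_le_pow ts (S k)). pose proof (pow_lt q (S k) ltac:(lra)). cbv beta iota. nra.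
Qed.

Lemma Fm_bound M m : (m <= M)%nat -> 0 <= Fm q M m <= INR M * q ^ (M - m).
Proof. intros H. unfold Fm. split. apply sumlt_nonneg. intros; apply ff_nonneg; auto.
 eapply Rle_trans. apply (sumlt_le _ (fun _ => q ^ (M - m))).
 - intros k Hk. eapply Rle_trans. apply ff_le_pow; auto. apply pow_le_dec; auto. lia.
 - rewrite sumlt_const. apply Rmult_le_compat_r. left; apply pow_lt; lra. apply le_INR; auto.
Qed.

Lemma Esum_bound p ss M : ((2 <= S p)%nat \/ exists t, In t ss /\ (2 <= t)%nat) ->
  0 <= Esum q p ss M <= INR M ^ (S (S (length ss))) * q ^ M.
Proof. intros Hbig. unfold Esum.
 assert (Hg : forall m, 0 <= pz m (qterm q (S p) m * Fm q M m)).
 { intros [|m]; simpl; [lra|]. apply Rmult_le_pos. apply qterm_nonneg; auto.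
   apply sumlt_nonneg. intros; apply ff_nonneg; auto. }
 split. apply wsum_nonneg; auto.
 pose proof (pow_lt q M ltac:(lra)). pose proof (pos_INR M).
 destruct Hbig as [Hp|Hb].
 - eapply Rle_trans. apply (wsum_bound_const ss M _ (INR M * q ^ M)); auto.
   + intros [|m] Hm. { simpl. nra. }
     cbn [pz]. pose proof (qterm_le_geom q hq (S p) (S m) Hp ltac:(lia)).
     pose proof (qterm_nonneg q hq (S p) (S m)). pose proof (Fm_bound M (S m) ltac:(lia)).
     rewrite pow_sub_inv in H3 by lia.
     pose proof (pow_qinv (S m)).
     assert (HH : qterm q (S p) (S m) * Fm q M (S m) <= q ^ S m * (INR M * (q ^ M * (/ q) ^ S m))) by (apply Rmult_le_compat; lra).
     replace (q ^ S m * (INR M * (q ^ M * (/ q) ^ S m))) with (INR M * q ^ M * (q ^ S m * (/ q) ^ S m)) in HH by ring.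
     rewrite pow_qinv in HH. lra.
   + right. cbn [pow]. ring.
 - eapply Rle_trans. apply (wsum_bound_big ss Hb M _ (INR M * q ^ M)); auto.
   + intros [|m] Hm. { simpl. nra. }
     cbn [pz]. pose proof (qterm_le1 q hq (S p) (S m) ltac:(lia)).
     pose proof (qterm_nonneg q hq (S p) (S m)). pose proof (Fm_bound M (S m) ltac:(lia)).
     rewrite pow_sub_inv in H3 by lia. nra.
   + right. cbn [pow]. ring.
Qed.

End B.


Lemma sumlt_incr F M : (forall k, 0 <= F k) -> sumlt F M <= sumlt F (S M).
Proof. intros H. simpl. pose proof (H M). lra. Qed.

Lemma lim_sumlt (u : nat -> nat -> R) (l : nat -> R) N :
  (forall j, (j < N)%nat -> is_lim_seq (u j) (l j)) ->
  is_lim_seq (fun M => sumlt (fun j => u j M) N) (sumlt l N).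
Proof. induction N; intros H; simpl.
 - apply is_lim_seq_const.
 - apply (is_lim_seq_plus' (fun M => sumlt (fun j => u j M) N) (u N)).
   apply IHN; intros; apply H; lia. apply H; lia. Qed.

Section Mn.
Variable q : R.
Hypothesis hq : 0 < q < 1.

Lemma conv_of u C : (forall M, u M <= u (S M)) -> (forall M, u M <= C) ->
  exists l : R, is_lim_seq u l /\ real (Lim_seq u) = l.
Proof. intros H1 H2. destruct (ex_finite_lim_seq_incr u C H1 H2) as [l Hl].
 exists l. split; auto. rewrite (is_lim_seq_unique _ _ Hl). reflexivity. Qed.

Lemma zsum_conv t ts : (2 <= t)%nat ->
  exists l : R, is_lim_seq (zsum q (t :: ts)) l /\ qzeta q (t :: ts) = l.
Proof. intros Ht. destruct (S_bound q hq (length ts)) as [C HC].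
 apply (conv_of _ C).
 - intros M. apply sumlt_incr. intros [|k]; [simpl; lra|]. apply Rmult_le_pos.
   apply qterm_nonneg; auto. apply zsum_nonneg; auto.
 - intros M. eapply Rle_trans. apply zsum_bound; auto. apply HC. Qed.

Lemma Ttrunc_conv Lst : (exists t, In t Lst /\ (2 <= t)%nat) ->
  exists l : R, is_lim_seq (Ttrunc q Lst) l /\ qT q Lst = l.
Proof. intros Hb. destruct (S_bound q hq (length Lst)) as [C HC].
 apply (conv_of _ C).
 - intros M. destruct Lst as [|t rest]; simpl; [lra|]. apply sumlt_incr. intros [|k]; [simpl; lra|].
   apply Rmult_le_pos. apply qterm_nonneg; auto. apply wsum_nonneg; auto. intros; apply ff_nonneg; auto.
 - intros M. eapply Rle_trans. apply Ttrunc_bound; auto. apply HC. Qed.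

End Mn.


Theorem theorem5p5 (q : R) (hq : 0 < q < 1) (s1 : nat) (ss : list nat)
  (hpos : List.Forall (fun s => (0 < s)%nat) (s1 :: ss))
  (hbig : exists j, In j (s1 :: ss) /\ (1 < j)%nat) :
  qT q (s1 :: ss) - qT q (ss ++ s1 :: nil)
  = qzeta q (S s1 :: ss)
    - sumlt (fun k => qzeta q ((s1 - k)%nat :: ss ++ (S k :: nil))) (s1 - 1).
Proof.
 destruct s1 as [|p]. { inversion hpos; lia. }
 replace (S p - 1)%nat with p by lia.
 assert (Hcase : (2 <= S p)%nat \/ exists t, In t ss /\ (2 <= t)%nat).
 { destruct hbig as [j [[E|I] Hj]]; [left; subst; lia | right; exists j; split; auto; lia]. }
 assert (Hbig2 : exists t, In t (ss ++ S p :: nil) /\ (2 <= t)%nat).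
 { destruct Hcase as [H|[t [I Ht]]].
   - exists (S p). split; auto. apply in_or_app. right. left. auto.
   - exists t. split; auto. apply in_or_app. left. auto. }
 destruct (Ttrunc_conv q hq _ Hbig2) as [b [Hb Eb]].
 destruct (zsum_conv q hq (S (S p)) ss ltac:(lia)) as [z0 [Hz0 Ez0]].
 assert (Hzj : forall j, (j < p)%nat -> is_lim_seq (zsum q ((S p - j)%nat :: ss ++ S j :: nil))
                 (qzeta q ((S p - j)%nat :: ss ++ S j :: nil))).
 { intros j Hj. destruct (zsum_conv q hq (S p - j) (ss ++ S j :: nil) ltac:(lia)) as [l [Hl El]].
   rewrite El. exact Hl. }
 assert (HE : is_lim_seq (Esum q p ss) 0).
 { apply (is_lim_seq_le_le (fun _ => 0) _ (fun M => INR M ^ S (S (length ss)) * q ^ M)).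
   - intros M. apply Esum_bound; auto.
   - apply is_lim_seq_const.
   - apply pow_lim; auto. }
 assert (HA : is_lim_seq (Ttrunc q (S p :: ss))
    (z0 + (b - 0) - sumlt (fun j => qzeta q ((S p - j)%nat :: ss ++ S j :: nil)) p)).
 { apply (is_lim_seq_ext (fun M => zsum q (S (S p) :: ss) M + (Ttrunc q (ss ++ S p :: nil) M - Esum q p ss M)
      - sumlt (fun j => zsum q ((S p - j)%nat :: ss ++ S j :: nil) M) p)).
   - intros M. rewrite (step1 q hq p ss M). rewrite step2. ring.
   - apply is_lim_seq_minus'. apply is_lim_seq_plus'; auto. apply is_lim_seq_minus'; auto.
     apply (lim_sumlt (fun j M => zsum q ((S p - j)%nat :: ss ++ S j :: nil) M)). exact Hzj. }
 unfold qT at 1. rewrite (is_lim_seq_unique _ _ HA). cbn [real].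
 rewrite Eb, Ez0. ring.
Qed.
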